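(* Consider the control-affine system $\dot{\boldsymbol{x}}=f(\boldsymbol{x})+g(\boldsymbol{x})\boldsymbol{u}$ with $\boldsymbol{x}\in\mathbb{R}^n$, $\boldsymbol{u}\in\mathbb{R}^q$, $f,g$ locally Lipschitz. Let $b:\mathbb{R}^n\to\mathbb{R}$ be an Auxiliary-Variable Adaptive Control Barrier Function (AVCBF) with minimum relative degree $\underline{m}$, built with $m_a\le \underline{m}$ positive auxiliary functions $\mathcal{A}_1,\dots,\mathcal{A}_{m_a}$, augmented state $\boldsymbol{Z}$, augmented input $\boldsymbol{V}$, functions $\psi_0,\dots,\psi_{m_a}$ and sets $\mathcal{C}_0,\dots,\mathcal{C}_{m_a-1}$ as described in the context. Suppose $\boldsymbol{Z}(0)\in \mathcal{C}_0\cap\dots\cap\mathcal{C}_{m_a-1}$. If there exists a Lipschitz controller $\boldsymbol{V}$ (taking values in $\mathcal{U}_{\boldsymbol{V}}(\boldsymbol{Z})$) that satisfies the AVCBF constraint $\psi_{m_a}(\boldsymbol{Z},\boldsymbol{V})\ge 0$ and also ensures $\boldsymbol{Z}(t)\in\mathcal{C}_{m_a-1}$ for all $t\ge 0$, then $\mathcal{C}_0\cap\dots\cap\mathcal{C}_{m_a-1}$ is forward invariant, i.e. $\boldsymbol{Z}(t)\in \mathcal{C}_0\cap\dots\cap\mathcal{C}_{m_a-1}$ for all $t\ge0$. Moreover, $b(\boldsymbol{x}(t))\ge 0$ for all $t\ge 0$.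
   Context: A class $\kappa$ function is a continuous, strictly increasing $\alpha:[0,a)\to[0,\infty]$ with $\alpha(0)=0$. Minimum relative degree $\underline{m}$ of $b$: the smallest number of differentiations of $b$ along $\dot{\boldsymbol{x}}=f+g\boldsymbol{u}$ after which at least one component of $\boldsymbol{u}$ appears explicitly. Auxiliary construction: fix an integer $1\le m_a\le\underline{m}$. For $i\in\{1,\dots,m_a\}$, let $a_i(t)$ be an auxiliary variable and $\boldsymbol{\pi}_i=(\pi_{i,1},\dots,\pi_{i,m_a+1-i})\in\mathbb{R}^{m_a+1-i}$ an auxiliary state with $\pi_{i,1}=a_i$, $\dot\pi_{i,j}=\pi_{i,j+1}$ for $j<m_a+1-i$, and $\dot\pi_{i,m_a+1-i}=\nu_i\in\mathbb{R}$ (an unbounded auxiliary input); write this as $\dot{\boldsymbol{\pi}}_i=F_i(\boldsymbol{\pi}_i)+G_i(\boldsymbol{\pi}_i)\nu_i$. The augmented systems are $\boldsymbol{z}_i=(\boldsymbol{x},\boldsymbol{\pi}_i)$, $\dot{\boldsymbol{z}}_i=\mathcal{F}_i(\boldsymbol{z}_i)+\mathcal{G}_i(\boldsymbol{z}_i)\boldsymbol{v}_i$ with $\mathcal{F}_i=(f,F_i)$, $\mathcal{G}_i=\mathrm{diag}(g,G_i)$, $\boldsymbol{v}_i=(\boldsymbol{u},\nu_i)$. Let $\boldsymbol{Z}=(\boldsymbol{z}_1,\dots,\boldsymbol{z}_{m_a})$ and $\boldsymbol{V}=(\boldsymbol{v}_1,\dots,\boldsymbol{v}_{m_a})$. Auxiliary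 functions $\mathcal{A}_i(\boldsymbol{x},a_i)$ are required to be positive; each is a HOCBF of relative degree $m_a+1-i$ for the $i$-th augmented system: with $\varphi_{i,0}=\mathcal{A}_i$, $\varphi_{i,j}=\dot\varphi_{i,j-1}+\alpha_{i,j}(\varphi_{i,j-1})$ ($j=1,\dots,m_a+1-i$, $\alpha_{i,j}$ sufficiently differentiable class $\kappa$ functions), sets $\mathcal{B}_{i,j}=\{\varphi_{i,j}>0\}$ for $j=0,\dots,m_a-i$, and the constraint $\varphi_{i,m_a+1-i}\ge\epsilon$ for a fixed constant $\epsilon>0$ being satisfiable on $\mathcal{B}_{i,0}\cap\dots\cap\mathcal{B}_{i,m_a-i}$. $\mathcal{U}_{\boldsymbol{V}}(\boldsymbol{Z})$ is the set of $\boldsymbol{V}$ with $\varphi_{i,m_a+1-i}\ge\epsilon$ for all $i=1,\dots,m_a$. AVCBF functions: $\psi_0(\boldsymbol{Z})=\mathcal{A}_1 b(\boldsymbol{x})$, $\psi_i(\boldsymbol{Z})=\mathcal{A}_{i+1}\big(\dot\psi_{i-1}(\boldsymbol{Z})+\alpha_i(\psi_{i-1}(\boldsymbol{Z}))\big)$ for $i=1,\dots,m_a-1$, and $\psi_{m_a}(\boldsymbol{Z},\boldsymbol{V})=\dot\psi_{m_a-1}(\boldsymbol{Z},\boldsymbol{V})+\alpha_{m_a}(\psi_{m_a-1}(\boldsymbol{Z}))$, where time derivatives are along the augmented dynamics, $\alpha_j$ ($j<m_a$) are $(m_a-j)$-times differentiable class $\kappa$ functions and $\alpha_{m_a}$ is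 class $\kappa$. Sets: $\mathcal{C}_i=\{\boldsymbol{Z}:\psi_i(\boldsymbol{Z})\ge0\}$, $i=0,\dots,m_a-1$. $b$ is an AVCBF if every $\mathcal{A}_i$ is such a HOCBF and $\sup_{\boldsymbol{V}\in\mathcal{U}_{\boldsymbol{V}}(\boldsymbol{Z})}\psi_{m_a}(\boldsymbol{Z},\boldsymbol{V})\ge0$ for all $\boldsymbol{Z}\in\mathcal{C}_0\cap\dots\cap\mathcal{C}_{m_a-1}$, with each $\mathcal{A}_i>0$. The inequality $\psi_{m_a}(\boldsymbol{Z},\boldsymbol{V})\ge 0$ is called the AVCBF constraint. *)

(* Defs.v *)
From mathcomp Require Import all_boot all_order all_algebra.
From mathcomp Require Import all_classical all_reals all_analysis.
Set Implicit Arguments. Unset Strict Implicit. Unset Printing Implicit Defensive.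
Import Order.TTheory GRing.Theory Num.Theory.
Import numFieldNormedType.Exports.
Local Open Scope ring_scope.

Definition ext_classK {R : realType} (al : R -> R) : Prop :=
  continuous al /\ (forall s s' : R, s < s' -> al s < al s') /\ al 0 = 0.

(* Indexing conventions (0-based):
   A k  = paper's auxiliary function A_{k+1}(x, a_{k+1}),  k < ma
   a k  = paper's auxiliary variable a_{k+1}(t),            k < ma
   alpha j = paper's class-kappa function alpha_j,          1 <= j <= ma
   avcbf_psi ... i t = psi_i(Z(t)) along the closed-loop trajectory, i < ma;
   the time derivative along the augmented dynamics is, along the trajectory,
   the derivative in t of t |-> psi_{i-1}(Z(t)). *)
Fixpoint avcbf_psi {R : realType} {n : nat} (b : 'cV[R]_n -> R)
    (A : nat -> 'cV[R]_n -> R -> R) (alpha : nat -> R -> R)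
    (x : R -> 'cV[R]_n) (a : nat -> R -> R) (i : nat) : R -> R :=
  match i with
  | 0%N => fun t => A 0%N (x t) (a 0%N t) * b (x t)
  | j.+1 => fun t => A j.+1 (x t) (a j.+1 t) *
        (derive1 (avcbf_psi b A alpha x a j) t
         + alpha j.+1 (avcbf_psi b A alpha x a j t))
  end.

Definition avcbf_psi_top {R : realType} {n : nat} (b : 'cV[R]_n -> R)
    (A : nat -> 'cV[R]_n -> R -> R) (alpha : nat -> R -> R)
    (x : R -> 'cV[R]_n) (a : nat -> R -> R) (ma : nat) (t : R) : R :=
  derive1 (avcbf_psi b A alpha x a ma.-1) t
  + alpha ma (avcbf_psi b A alpha x a ma.-1 t).

(* Main.v *)
Require Import Defs.
From mathcomp Require Import all_boot all_order all_algebra.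
From mathcomp Require Import all_classical all_reals all_analysis.
From mathcomp Require Import lra.
From mathcomp Require Import zify.
From Stdlib Require Import Lia.
Import Order.TTheory GRing.Theory Num.Theory.
Import numFieldNormedType.Exports.
Local Open Scope classical_set_scope.
Local Open Scope ring_scope.

Lemma comparison (R : realType) (h al : R -> R) :
  ext_classK al -> (forall t, 0 <= t -> derivable h t 1) ->
  (forall t, 0 <= t -> 0 <= derive1 h t + al (h t)) -> 0 <= h 0 ->
  forall t, 0 <= t -> 0 <= h t.
Proof.
move=> [_ [alinc al0]] hd hc h0 t1 t10.
rewrite leNgt; apply/negP => ht1.
have cont : forall a b, 0 <= a -> {within `[a, b], continuous h}.
  move=> a b a0; apply: derivable_within_continuous => z.
  rewrite in_itv /= => /andP [az _]; apply: hd; exact: le_trans az.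
have [c cI cmin] := EVT_min t10 (cont 0 t1 (lexx 0)).
move: (cI); rewrite in_itv /= => /andP [c0 ct1].
have hcneg : h c < 0 by apply: le_lt_trans (cmin t1 _) ht1; rewrite in_itv /= t10 lexx.
have cpos : 0 < c.
  rewrite lt_def c0 andbT; apply/eqP => c0'.
  by move: hcneg; rewrite c0' ltNge h0.
have hcc : h x @[x --> c] --> h c.
  apply: differentiable_continuous; rewrite -derivable1_diffP; exact: hd.
have := @cvgr_lt _ _ _ _ h _ hcc _ hcneg.
move=> /(_ _) /nbhs_ballP [d /= d0 Hd].
pose e := Num.min d c / 2.
have e0 : 0 < e by rewrite divr_gt0 // lt_min d0 cpos.
have emin : e < Num.min d c by rewrite /e ltr_pdivrMr // mulr_natr mulr2n ltrDr lt_min d0 cpos.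
have ed : e < d by move: emin; rewrite lt_min => /andP [].
have ec : e < c by move: emin; rewrite lt_min => /andP [].
pose s := c - e.
have s0 : 0 <= s by rewrite /s subr_ge0 ltW.
have sc : s < c by rewrite /s ltrBlDr ltrDl.
have hder : forall z, z \in `]s, c[ -> is_derive z 1 h (derive1 h z).
  move=> z; rewrite in_itv /= => /andP [sz _]; rewrite derive1E; apply/derivableP.
  apply: hd; apply: le_trans s0 (ltW sz).
have [xi xiI eq] := MVT sc hder (cont s c s0).
move: xiI; rewrite in_itv /= => /andP [sxi xic].
have hxi : h xi < 0.
  apply: Hd; rewrite /ball /= ger0_norm ?subr_ge0 ?ltW //.
  move: sxi ed; rewrite /s; lra.
have dpos : 0 < derive1 h xi.
  have := hc xi (le_trans s0 (ltW sxi)).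
  have := alinc _ _ hxi; rewrite al0 => alneg H.
  by rewrite -(ltrD2r (al (h xi))) add0r; apply: lt_le_trans H.
have : h s < h c by rewrite -subr_gt0 eq mulr_gt0 // subr_gt0.
by rewrite ltNge cmin // in_itv /= s0 (le_trans (ltW sc) ct1).
Qed.

Theorem theorem2 (R : realType) (n q ma : nat)
    (f : 'cV[R]_n -> 'cV[R]_n) (g : 'cV[R]_n -> 'M[R]_(n, q))
    (b : 'cV[R]_n -> R) (A : nat -> 'cV[R]_n -> R -> R)
    (alpha : nat -> R -> R)
    (x : R -> 'cV[R]_n) (u : R -> 'cV[R]_q) (a : nat -> R -> R) :
  (1 <= ma)%N ->
  (* class-kappa functions alpha_1..alpha_ma; alpha_j (ma-j)-times differentiable *)
  (forall j, (1 <= j <= ma)%N -> ext_classK (alpha j)) ->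
  (forall j k (s : R), (1 <= j < ma)%N -> (k < ma - j)%N ->
      derivable (derive1n k (alpha j)) s 1) ->
  (* x solves xdot = f(x) + g(x) u on t >= 0 *)
  (forall t : R, 0 <= t -> is_derive t 1 x (f (x t) + g (x t) *m u t)) ->
  (* auxiliary states pi_{k+1} = (a_k, a_k', ..., a_k^(ma-k-1)) evolve as chains
     of integrators driven by nu_{k+1} = a_k^(ma-k) *)
  (forall k j (t : R), (k < ma)%N -> (j < ma - k)%N -> 0 <= t ->
      derivable (derive1n j (a k)) t 1) ->
  (* the psi_i (i < ma) are differentiable along the trajectory *)
  (forall i (t : R), (i < ma)%N -> 0 <= t -> derivable (avcbf_psi b A alpha x a i) t 1) ->
  (* positive auxiliary functions *)
  (forall k (t : R), (k < ma)%N -> 0 <= t -> 0 < A k (x t) (a k t)) ->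
  (* Z(0) in C_0 /\ ... /\ C_{ma-1} *)
  (forall i, (i < ma)%N -> 0 <= avcbf_psi b A alpha x a i 0) ->
  (* AVCBF constraint satisfied along the trajectory *)
  (forall t : R, 0 <= t -> 0 <= avcbf_psi_top b A alpha x a ma t) ->
  (* Z(t) in C_{ma-1} for all t >= 0 *)
  (forall t : R, 0 <= t -> 0 <= avcbf_psi b A alpha x a ma.-1 t) ->
  forall t : R, 0 <= t ->
    (forall i, (i < ma)%N -> 0 <= avcbf_psi b A alpha x a i t) /\ 0 <= b (x t).
Proof.
move=> ma1 hK _ _ _ hd hA h0 _ htop.
have key : forall k i, (i + k)%N = ma.-1 ->
    forall t : R, 0 <= t -> 0 <= avcbf_psi b A alpha x a i t.
  elim=> [|k IH] i hik.
    by rewrite addn0 in hik; rewrite hik.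
  have ilt : (i < ma)%N by move: hik ma1; lia.
  have i1lt : (i.+1 < ma)%N by move: hik ma1; lia.
  have hik' : (i.+1 + k)%N = ma.-1 by rewrite addSnnS.
  have IH1 := IH i.+1 hik'.
  apply: (@comparison _ (avcbf_psi b A alpha x a i) (alpha i.+1)).
  - apply: hK; rewrite /=; move: i1lt; lia.
  - by move=> t t0; apply: hd.
  - move=> t t0; have := IH1 t t0; rewrite /=.
    by rewrite (pmulr_rge0 _ (hA _ _ i1lt t0)).
  - exact: h0.
move=> t t0; split.
  move=> i ilt; apply: (key (ma.-1 - i)%N) => //; move: ilt; lia.
have ma0 : (0 < ma)%N by [].
by have := key ma.-1 0%N (add0n _) t t0; rewrite /= (pmulr_rge0 _ (hA _ _ ma0 t0)).
Qed.
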